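(* For parameters $0\le b\le1$ and $0\le c\le1$ with $bc\neq1$, let $\mathcal{N}_{b,c}$ be the qubit channel $\mathcal{N}_{b,c}(O)=K_0OK_0^\dagger+K_1OK_1^\dagger$ with (in the standard basis) $$K_0=\begin{pmatrix}\sqrt{\frac{(1+b)(1+c)}{2(1+bc)}}&0\\0&\sqrt{\frac{(1-b)(1+c)}{2(1-bc)}}\end{pmatrix},\qquad K_1=\begin{pmatrix}0&\sqrt{\frac{(1+b)(1-c)}{2(1-bc)}}\\\sqrt{\frac{(1-b)(1-c)}{2(1+bc)}}&0\end{pmatrix}.$$ If $0\le c'\le c\le1$ and $bc\neq1$, then there exists a qubit quantum channel $\mathcal{M}$ such that $\mathcal{N}_{b,c'}=\mathcal{N}_{b,c}\circ\mathcal{M}$.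
   Context: A qubit quantum channel is a completely positive trace-preserving linear map from $\mathcal{L}(\mathbb{C}^2)$ to $\mathcal{L}(\mathbb{C}^2)$. *)

(* Defs.v *)
From HB Require Import structures.
From mathcomp Require Import all_boot all_order all_algebra.
From mathcomp Require Import reals.
From mathcomp Require Import complex.
Set Implicit Arguments. Unset Strict Implicit. Unset Printing Implicit Defensive.
Import Order.TTheory GRing.Theory Num.Theory.
Local Open Scope ring_scope.

Definition adjmx (R : realType) m n (A : 'M[R[i]]_(m, n)) : 'M[R[i]]_(n, m) :=
  \matrix_(i, j) ((A j i)^*)%C.

(* Positive semidefiniteness of a "matrix" indexed by a finite type I:
   v^* X v is a nonnegative real for every vector v (in the partial order of
   R[i], 0 <= z means z is real and nonnegative). *)
Definition psd (R : realType) (I : finType) (X : I -> I -> R[i]) : Prop :=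
  forall v : I -> R[i], 0 <= \sum_i \sum_j ((v i)^*)%C * X i j * v j.

(* Ampliation id_n (x) Phi acting on n x n block matrices with 2 x 2 blocks,
   indexed by 'I_n * 'I_2. *)
Definition ampl (R : realType) (n : nat) (Phi : 'M[R[i]]_2 -> 'M[R[i]]_2)
  (X : 'I_n * 'I_2 -> 'I_n * 'I_2 -> R[i]) : 'I_n * 'I_2 -> 'I_n * 'I_2 -> R[i] :=
  fun p q => Phi (\matrix_(a, b) X (p.1, a) (q.1, b)) p.2 q.2.

Definition is_linear_map (R : realType) (Phi : 'M[R[i]]_2 -> 'M[R[i]]_2) : Prop :=
  forall (a : R[i]) (A B : 'M[R[i]]_2), Phi (a *: A + B) = a *: Phi A + Phi B.

Definition completely_positive (R : realType) (Phi : 'M[R[i]]_2 -> 'M[R[i]]_2) : Prop :=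
  forall (n : nat) (X : 'I_n * 'I_2 -> 'I_n * 'I_2 -> R[i]),
    psd X -> psd (ampl Phi X).

Definition trace_preserving (R : realType) (Phi : 'M[R[i]]_2 -> 'M[R[i]]_2) : Prop :=
  forall A : 'M[R[i]]_2, \tr (Phi A) = \tr A.

Definition qubit_channel (R : realType) (Phi : 'M[R[i]]_2 -> 'M[R[i]]_2) : Prop :=
  [/\ is_linear_map Phi, completely_positive Phi & trace_preserving Phi].

Definition sqC (R : realType) (x : R) : R[i] := ((Num.sqrt x)%:C)%C.

Definition K0 (R : realType) (b c : R) : 'M[R[i]]_2 :=
  \matrix_(i < 2, j < 2)
    if (i == 0) && (j == 0) then sqC ((1 + b) * (1 + c) / (2 * (1 + b * c)))
    else if (i == 1) && (j == 1) then sqC ((1 - b) * (1 + c) / (2 * (1 - b * c)))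
    else 0.

Definition K1 (R : realType) (b c : R) : 'M[R[i]]_2 :=
  \matrix_(i < 2, j < 2)
    if (i == 0) && (j == 1) then sqC ((1 + b) * (1 - c) / (2 * (1 - b * c)))
    else if (i == 1) && (j == 0) then sqC ((1 - b) * (1 - c) / (2 * (1 + b * c)))
    else 0.

Definition Nch (R : realType) (b c : R) (O : 'M[R[i]]_2) : 'M[R[i]]_2 :=
  K0 b c *m O *m adjmx (K0 b c) + K1 b c *m O *m adjmx (K1 b c).

(* Main.v *)
Require Import Defs.
From HB Require Import structures.
From mathcomp Require Import all_boot all_order all_algebra.
From mathcomp Require Import reals.
From mathcomp Require Import complex.
Import Order.TTheory GRing.Theory Num.Theory.
From mathcomp Require Import ring lra.
Local Open Scope ring_scope.

Set Implicit Arguments.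
Section S.
Context {R : realType}.
Definition dg (x0 x1 : R) : 'M[R[i]]_2 := \matrix_(i < 2, j < 2)
  if (i == 0) && (j == 0) then (x0%:C)%C else if (i == 1) && (j == 1) then (x1%:C)%C else 0.
Definition ad (y0 y1 : R) : 'M[R[i]]_2 := \matrix_(i < 2, j < 2)
  if (i == 0) && (j == 1) then (y0%:C)%C else if (i == 1) && (j == 0) then (y1%:C)%C else 0.
Definition KM x0 x1 y0 y1 (O : 'M[R[i]]_2) :=
  dg x0 x1 *m O *m adjmx (dg x0 x1) + ad y0 y1 *m O *m adjmx (ad y0 y1).
Definition A0 (b c : R) := (1 + b) * (1 + c) / (2 * (1 + b * c)).
Definition A1 (b c : R) := (1 - b) * (1 + c) / (2 * (1 - b * c)).
Definition B0 (b c : R) := (1 + b) * (1 - c) / (2 * (1 - b * c)).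
Definition B1 (b c : R) := (1 - b) * (1 - c) / (2 * (1 + b * c)).
Definition LL (b c : R) := (1 - b) * (1 + b) / ((1 - b * c) * (1 + b * c)).
Definition sq x := Num.sqrt (x : R).
Lemma Nch_KM b c O : Nch b c O = KM (sq (A0 b c)) (sq (A1 b c)) (sq (B0 b c)) (sq (B1 b c)) O.
Proof. by []. Qed.

Lemma cre (x : R) : (x +i* (-0))%C = (x%:C)%C. Proof. by rewrite oppr0. Qed.
Lemma cze : ((0:R) +i* (-0))%C = 0. Proof. by rewrite oppr0. Qed.
Lemma KM_E x0 x1 y0 y1 O : KM x0 x1 y0 y1 O = \matrix_(i < 2, j < 2)
 if i == 0 then (if j == 0 then ((x0*x0)%:C * O 0 0 + (y0*y0)%:C * O 1 1)%C
   else ((x0*x1)%:C * O 0 1 + (y0*y1)%:C * O 1 0)%C)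
 else (if j == 0 then ((x0*x1)%:C * O 1 0 + (y0*y1)%:C * O 0 1)%C
   else ((x1*x1)%:C * O 1 1 + (y1*y1)%:C * O 0 0)%C).
Proof.
apply/matrixP => i j; rewrite !mxE !big_ord_recl !big_ord0 !mxE.
rewrite !big_ord_recl !big_ord0 !mxE.
case: i => [[|[|i]] Hi]; case: j => [[|[|j]] Hj] //=.
all: have E1 : lift ord0 ord0 = (1 : 'I_2) by apply/val_inj.
all: have E0 : ord0 = (0 : 'I_2) by apply/val_inj.
all: rewrite ?E1 ?E0 ?cre ?cze !rmorphM /=.
all: ring.
Qed.

Lemma KM_comp x0 x1 y0 y1 u0 u1 v0 v1 z0 z1 w0 w1 :
 z0*z0 = x0*x0*(u0*u0) + y0*y0*(v1*v1) ->
 w0*w0 = x0*x0*(v0*v0) + y0*y0*(u1*u1) ->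
 z1*z1 = x1*x1*(u1*u1) + y1*y1*(v0*v0) ->
 w1*w1 = x1*x1*(v1*v1) + y1*y1*(u0*u0) ->
 z0*z1 = x0*x1*(u0*u1) + y0*y1*(v0*v1) ->
 w0*w1 = x0*x1*(v0*v1) + y0*y1*(u0*u1) ->
 forall O, KM z0 z1 w0 w1 O = KM x0 x1 y0 y1 (KM u0 u1 v0 v1 O).
Proof.
move=> H1 H2 H3 H4 H5 H6 O; rewrite !KM_E; apply/matrixP => i j; rewrite !mxE.
case: i => [[|[|i]] Hi]; case: j => [[|[|j]] Hj] //=.
all: rewrite ?H1 ?H2 ?H3 ?H4 ?H5 ?H6 !rmorphD !rmorphM; ring.
Qed.
Lemma sum_fst (n : nat) (k : 'I_n) (F : 'I_n * 'I_2 -> R[i]) :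
  \sum_(i : 'I_n * 'I_2) (if i.1 == k then F i else 0) = \sum_(a < 2) F (k, a).
Proof.
transitivity (\sum_(i1 < n) \sum_(i2 < 2) (if i1 == k then F (i1, i2) else 0)).
  by rewrite pair_big; apply: eq_big => // -[].
rewrite (bigD1 k) //= [X in _ + X]big1 ?addr0.
  by apply: eq_bigr => a _; rewrite eqxx.
by move=> i1 /negbTE ->; rewrite big1.
Qed.

Lemma psd_congr (I J : finType) (T : J -> I -> R[i]) (X : I -> I -> R[i]) (v : J -> R[i]) :
 \sum_p \sum_q ((v p)^*)%C * (\sum_i \sum_j T p i * X i j * ((T q j)^*)%C) * v q =
 \sum_i \sum_j ((\sum_q ((T q i)^*)%C * v q)^*)%C * X i j * (\sum_q ((T q j)^*)%C * v q).
Proof.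
symmetry.
under eq_bigr => i _ do under eq_bigr => j _ do
  rewrite rmorph_sum mulr_suml mulr_suml.
under eq_bigr => i _ do under eq_bigr => j _ do under eq_bigr => p _ do
  rewrite mulr_sumr.
under eq_bigr => i _ do rewrite exchange_big.
rewrite exchange_big.
under eq_bigr => p _ do under eq_bigr => i _ do rewrite exchange_big.
under eq_bigr => p _ do rewrite exchange_big.
apply: eq_bigr => p _; apply: eq_bigr => q _.
rewrite mulr_sumr mulr_suml; apply: eq_bigr => i _.
rewrite mulr_sumr mulr_suml; apply: eq_bigr => j _.
rewrite rmorphM /= conjcK; ring.
Qed.


Lemma ifM0 (c : bool) (a x : R[i]) : a * (if c then x else 0) = if c then a * x else 0.
Proof. by case: c; rewrite ?mulr0. Qed.
Lemma if0M (c : bool) (a x : R[i]) : (if c then x else 0) * a = if c then x * a else 0.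
Proof. by case: c; rewrite ?mul0r. Qed.
Lemma big_if0 (I : finType) (c : bool) (f : I -> R[i]) :
  \sum_i (if c then f i else 0) = if c then \sum_i f i else 0.
Proof. case: c => //; exact: big1. Qed.

Lemma amplK (n : nat) (K : 'M[R[i]]_2) (X : 'I_n * 'I_2 -> 'I_n * 'I_2 -> R[i]) p q :
  ampl (fun O => K *m O *m adjmx K) X p q =
  \sum_i \sum_j (if i.1 == p.1 then K p.2 i.2 else 0) * X i j *
     ((if j.1 == q.1 then K q.2 j.2 else 0)^*)%C.
Proof.
rewrite /ampl !mxE.
under [RHS]eq_bigr => i _ do under eq_bigr => j _ do
  rewrite (fun_if conjc) conjc0 ifM0.
under [RHS]eq_bigr => i _ do rewrite (@sum_fst _ q.1 (fun j => _ * X i j * (K q.2 j.2)^*%C)).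
under [RHS]eq_bigr => i _ do under eq_bigr => j _ do rewrite !if0M.
under [RHS]eq_bigr => i _ do rewrite big_if0.
rewrite (@sum_fst _ p.1 (fun i => \sum_j K p.2 i.2 * X i (q.1, j) * (K q.2 j)^*%C)) /=.
rewrite exchange_big; apply: eq_bigr => b _; rewrite !mxE mulr_suml; apply: eq_bigr => a _.
by rewrite !mxE.
Qed.

Lemma cp_KM x0 x1 y0 y1 : completely_positive (KM x0 x1 y0 y1).
Proof.
move=> n X HX v.
have E : forall p q, ampl (KM x0 x1 y0 y1) X p q =
  ampl (fun O => dg x0 x1 *m O *m adjmx (dg x0 x1)) X p q +
  ampl (fun O => ad y0 y1 *m O *m adjmx (ad y0 y1)) X p q.
  by move=> p q; rewrite /ampl /KM mxE.
under eq_bigr => p _ do under eq_bigr => q _ do rewrite E mulrDr mulrDl.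
under eq_bigr => p _ do rewrite big_split.
rewrite big_split /=; apply: addr_ge0.
  under eq_bigr => p _ do under eq_bigr => q _ do rewrite amplK.
  by rewrite psd_congr; apply: HX.
under eq_bigr => p _ do under eq_bigr => q _ do rewrite amplK.
by rewrite psd_congr; apply: HX.
Qed.

Lemma lin_KM x0 x1 y0 y1 : is_linear_map (KM x0 x1 y0 y1).
Proof.
move=> a A B; rewrite !KM_E; apply/matrixP => i j; rewrite !mxE.
case: i => [[|[|i]] Hi]; case: j => [[|[|j]] Hj] //=; ring.
Qed.

Lemma tp_KM x0 x1 y0 y1 : x0 * x0 + y1 * y1 = 1 -> x1 * x1 + y0 * y0 = 1 ->
  trace_preserving (KM x0 x1 y0 y1).
Proof.
move=> H1 H2 A; rewrite KM_E /mxtrace !big_ord_recl !big_ord0 !mxE /=.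
have -> : x0 * x0 = 1 - y1 * y1 by rewrite -H1 addrK.
have -> : x1 * x1 = 1 - y0 * y0 by rewrite -H2 addrK.
rewrite !rmorphB !rmorph1.
have E1 : lift ord0 ord0 = (1 : 'I_2) by apply/val_inj.
have E0 : ord0 = (0 : 'I_2) by apply/val_inj.
rewrite ?E0 ?E1; ring.
Qed.

Lemma sqsq x : 0 <= x -> sq x * sq x = x.
Proof. by move=> hx; rewrite /sq -expr2 sqr_sqrtr. Qed.

Lemma sq_prod x y k l : 0 <= x -> 0 <= k -> 0 <= l -> x * y = k ^+ 2 * l ->
  sq x * sq y = k * sq l.
Proof.
move=> hx hk hl E; rewrite /sq -sqrtrM // E sqrtrM ?exprn_ge0 // sqrtr_sqr ger0_norm //.
Qed.

Lemma facts b c : 0 <= b -> b <= 1 -> 0 <= c -> c <= 1 -> b * c < 1 ->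
  [/\ [/\ sq (A0 b c) * sq (A0 b c) = A0 b c, sq (A1 b c) * sq (A1 b c) = A1 b c,
      sq (B0 b c) * sq (B0 b c) = B0 b c & sq (B1 b c) * sq (B1 b c) = B1 b c],
   sq (A0 b c) * sq (A1 b c) = (1 + c) / 2 * sq (LL b c),
   sq (B0 b c) * sq (B1 b c) = (1 - c) / 2 * sq (LL b c),
   A0 b c + B1 b c = 1 & A1 b c + B0 b c = 1].
Proof.
move=> hb0 hb1 hc0 hc1 hbc.
have hbc0 : 0 <= b * c by apply: mulr_ge0.
have d1 : 1 + b * c != 0 by rewrite gt_eqF //; lra.
have d2 : 1 - b * c != 0 by rewrite gt_eqF //; lra.
have h2 : (2 : R) != 0 by rewrite pnatr_eq0.
have gA0 : 0 <= A0 b c by apply: divr_ge0; [apply: mulr_ge0|]; lra.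
have gA1 : 0 <= A1 b c by apply: divr_ge0; [apply: mulr_ge0|]; lra.
have gB0 : 0 <= B0 b c by apply: divr_ge0; [apply: mulr_ge0|]; lra.
have gB1 : 0 <= B1 b c by apply: divr_ge0; [apply: mulr_ge0|]; lra.
have gL : 0 <= LL b c by apply: divr_ge0; apply: mulr_ge0; lra.
split; first by split; apply: sqsq.
- apply: sq_prod => //; first lra.
  by rewrite /A0 /A1 /LL; field; rewrite ?d1 ?d2 ?h2.
- apply: sq_prod => //; first lra.
  by rewrite /B0 /B1 /LL; field; rewrite ?d1 ?d2 ?h2.
- by rewrite /A0 /B1; field; rewrite ?d1 ?h2.
- by rewrite /A1 /B0; field; rewrite ?d2 ?h2.
Qed.

Lemma LL_prod b c g : 0 <= b -> b <= 1 -> 0 <= c -> c <= 1 -> 0 <= g -> g <= 1 -> b * c < 1 ->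
  sq (LL b c) * sq (LL (b * c) g) = sq (LL b (c * g)).
Proof.
move=> hb0 hb1 hc0 hc1 hg0 hg1 hbc.
have hbc0 : 0 <= b * c by apply: mulr_ge0.
have hbcg : b * c * g <= b * c by rewrite ler_piMr.
have hbcg0 : 0 <= b * c * g by apply: mulr_ge0.
have d1 : 1 + b * c != 0 by rewrite gt_eqF //; lra.
have d2 : 1 - b * c != 0 by rewrite gt_eqF //; lra.
have d3 : 1 + b * c * g != 0 by rewrite gt_eqF //; lra.
have d4 : 1 - b * c * g != 0 by rewrite gt_eqF //; lra.
have gL : 0 <= LL b c by apply: divr_ge0; apply: mulr_ge0; lra.
have gL' : 0 <= LL (b * c) g by apply: divr_ge0; apply: mulr_ge0; lra.
rewrite /sq -sqrtrM //; congr Num.sqrt; rewrite /LL mulrA.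
by field; rewrite ?mulrA ?d1 ?d2 ?d3 ?d4.
Qed.
End S.

Theorem mainTheorem6 (R : realType) (b c c' : R) :
  0 <= b -> b <= 1 -> 0 <= c -> c <= 1 -> 0 <= c' -> c' <= c -> b * c != 1 ->
  exists M : 'M[R[i]]_2 -> 'M[R[i]]_2,
    qubit_channel M /\ (forall O : 'M[R[i]]_2, Nch b c' O = Nch b c (M O)).
Proof.
move=> hb0 hb1 hc0 hc1 hc'0 hc'c hbc1.
have hbc0 : 0 <= b * c by apply: mulr_ge0.
have hbc : b * c < 1.
  by rewrite lt_neqAle hbc1 /= mulr_ile1.
pose g := if c == 0 then 1 else c' / c.
have [hg0 hg1 hcg] : [/\ 0 <= g, g <= 1 & c * g = c'].
  rewrite /g; case: eqP => [c0|/eqP cn0].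
    split => //; rewrite c0 mul0r in hc'c *; apply/eqP; by rewrite eq_le hc'0 hc'c.
  have cp : 0 < c by rewrite lt_neqAle eq_sym cn0.
  split; first exact: divr_ge0.
    by rewrite ler_pdivrMr // mul1r.
  by rewrite mulrC divfK.
rewrite -hcg.
have hbg0 : 0 <= b * c * g by apply: mulr_ge0.
have hbg : b * c * g < 1 by apply: le_lt_trans hbc; rewrite ler_piMr.
have hbc1' : b * c <= 1 by apply: ltW.
have [[e1 e2 e3 e4] p1 p2 t1 t2] := @facts _ b c hb0 hb1 hc0 hc1 hbc.
have [[f1 f2 f3 f4] q1 q2 s1 s2] := @facts _ (b * c) g hbc0 hbc1' hg0 hg1 hbg.
have hcg1 : c * g <= 1 by rewrite hcg; apply: le_trans hc'c hc1.
have hcg0 : 0 <= c * g by apply: mulr_ge0.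
have hbcg : b * (c * g) < 1 by rewrite mulrA.
have [[k1 k2 k3 k4] r1 r2 _ _] := @facts _ b (c * g) hb0 hb1 hcg0 hcg1 hbcg.
have LP := @LL_prod _ b c g hb0 hb1 hc0 hc1 hg0 hg1 hbc.
have h2 : (2 : R) != 0 by rewrite pnatr_eq0.
have d1 : 1 + b * c != 0 by rewrite gt_eqF //; lra.
have d2 : 1 - b * c != 0 by rewrite gt_eqF //; lra.
have d3 : 1 + b * c * g != 0 by rewrite gt_eqF //; lra.
have d4 : 1 - b * c * g != 0 by rewrite gt_eqF //; lra.
exists (KM (sq (A0 (b * c) g)) (sq (A1 (b * c) g)) (sq (B0 (b * c) g)) (sq (B1 (b * c) g))).
split.
  split; [exact: lin_KM | exact: cp_KM | apply: tp_KM].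
  - by rewrite f1 f4.
  - by rewrite f2 f3.
move=> O; rewrite !Nch_KM; apply: KM_comp.
- rewrite ?k1 ?k2 ?k3 ?k4 ?e1 ?e2 ?e3 ?e4 ?f1 ?f2 ?f3 ?f4 /A0 /A1 /B0 /B1; field; rewrite ?mulrA ?d1 ?d2 ?d3 ?d4 ?h2 //.
- rewrite ?k1 ?k2 ?k3 ?k4 ?e1 ?e2 ?e3 ?e4 ?f1 ?f2 ?f3 ?f4 /A0 /A1 /B0 /B1; field; rewrite ?mulrA ?d1 ?d2 ?d3 ?d4 ?h2 //.
- rewrite ?k1 ?k2 ?k3 ?k4 ?e1 ?e2 ?e3 ?e4 ?f1 ?f2 ?f3 ?f4 /A0 /A1 /B0 /B1; field; rewrite ?mulrA ?d1 ?d2 ?d3 ?d4 ?h2 //.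
- rewrite ?k1 ?k2 ?k3 ?k4 ?e1 ?e2 ?e3 ?e4 ?f1 ?f2 ?f3 ?f4 /A0 /A1 /B0 /B1; field; rewrite ?mulrA ?d1 ?d2 ?d3 ?d4 ?h2 //.
- rewrite r1 p1 p2 q1 q2 -LP; field; rewrite ?h2 //.
- rewrite r2 p1 p2 q1 q2 -LP; field; rewrite ?h2 //.
Qed.
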